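(* The lattice $K$ (defined in the context) has the following properties: (i) $K$ is infinite, generated by three elements, and $2$-modular; (ii) for every positive integer $h$, $K$ is $\mathbf{M}^h$-amenable, that is, $K\otimes L$ is a capped tensor product for every $h$-modular lattice $L$ with zero.
   Context: $K$ is the lattice consisting of $\varnothing$, $C=\{c\}$, $A_m=\{a_k:k\geq m\}$, $B_n=\{b_k:k\geq n\}$ ($m,n<\omega$), and the sets $C\cup A_m\cup B_n$ with $m,n<\omega$, $|m-n|\leq1$, all ordered by inclusion (here $c,a_n,b_n$ are distinct symbols); meets are intersections. For a lattice $L$, define $\langle x,y,z\rangle^{(1)}=\langle x\vee(y\wedge z),y\vee(x\wedge z),z\vee(x\wedge y)\rangle$ on $L^3$, $u^{(0)}=u$, $u^{(k+1)}=(u^{(k)})^{(1)}$; $L$ is $h$-modular if $u^{(h+1)}=u^{(h)}$ for all $u\in L^3$. Tensor products: for join-semilattices with zero $A,B$, a bi-ideal of $A\times B$ is a down-set containing $(A\times\{0\})\cup(\{0\}\times B)$ and closed under lateral joins (joins of pairs $\langle a_0,b_0\rangle,\langle a_1,b_1\rangle$ with $a_0=a_1$ or $b_0=b_1$); $A\otimes B$ is the join-semilattice of compact elements of the algebraic lattice of all bi-ideals. A bi-ideal $I$ is capped if there is a finite $\Gamma\subseteq A\times B$ such that $I$ is the down-set generated by $\Gamma\cup(A\times\{0\})\cup(\{0\}\times B)$; $A\otimes B$ is a capped tensor product if all its elements are capped. *)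

(* Defs.v *)
From HB Require Import structures.
From mathcomp Require Import all_boot all_order.
From mathcomp Require Import zify.
From Stdlib Require Import List.

Set Implicit Arguments.
Unset Strict Implicit.
Unset Printing Implicit Defensive.

Import Order.TTheory.

Section LatticeNotions.
Variables (T : Type) (meet join : T -> T -> T).

Definition hstep (u : T * T * T) : T * T * T :=
  let: (x, y, z) := u in
  (join x (meet y z), join y (meet x z), join z (meet x y)).

Definition hiter (k : nat) (u : T * T * T) : T * T * T := iter k hstep u.

Definition hmodular (h : nat) : Prop :=
  forall u : T * T * T, hiter h.+1 u = hiter h u.

Definition generates3 (x y z : T) : Prop :=
  forall S : T -> Prop, S x -> S y -> S z ->
    (forall a b, S a -> S b -> S (meet a b)) ->
    (forall a b, S a -> S b -> S (join a b)) ->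
    forall t, S t.

Definition generated_by_three : Prop := exists x y z, generates3 x y z.

End LatticeNotions.

Definition infinite_type (T : Type) : Prop :=
  ~ exists s : list T, forall x : T, In x s.

Section Tensor.
Variables (A B : Type).
Variables (leA : A -> A -> Prop) (joinA : A -> A -> A) (zeroA : A).
Variables (leB : B -> B -> Prop) (joinB : B -> B -> B) (zeroB : B).

Definition biideal (I : A * B -> Prop) : Prop :=
  [/\ (forall p q : A * B, I q -> leA p.1 q.1 -> leB p.2 q.2 -> I p),
      (forall a : A, I (a, zeroB)),
      (forall b : B, I (zeroA, b)),
      (forall (a : A) (b0 b1 : B), I (a, b0) -> I (a, b1) -> I (a, joinB b0 b1)) &
      (forall (a0 a1 : A) (b : B), I (a0, b) -> I (a1, b) -> I (joinA a0 a1, b))].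

(* the bi-ideal generated by X (the join of a family of bi-ideals in the
   lattice of bi-ideals is the bi-ideal generated by their union) *)
Definition bigen (X : A * B -> Prop) (p : A * B) : Prop :=
  forall I, biideal I -> (forall q, X q -> I q) -> I p.

Definition compact_biideal (I : A * B -> Prop) : Prop :=
  biideal I /\
  forall S : (A * B -> Prop) -> Prop,
    (forall J, S J -> biideal J) ->
    (forall p, I p -> bigen (fun q => exists J, S J /\ J q) p) ->
    exists s : list (A * B -> Prop),
      (forall J, In J s -> S J) /\
      (forall p, I p -> bigen (fun q => exists J, In J s /\ J q) p).

Definition capped (I : A * B -> Prop) : Prop :=
  exists Gamma : list (A * B),
    forall p : A * B,
      I p <-> exists q : A * B,
        (In q Gamma \/ q.2 = zeroB \/ q.1 = zeroA) /\ leA p.1 q.1 /\ leB p.2 q.2.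

(* A (x) B (the compact bi-ideals) is a capped tensor product *)
Definition capped_tensor : Prop :=
  forall I, compact_biideal I -> capped I.

End Tensor.

Inductive Sym : Type := sc | sa of nat | sb of nat.

Definition symC (s : Sym) : bool := if s is sc then true else false.
Definition symA (m : nat) (s : Sym) : bool := if s is sa k then m <= k else false.
Definition symB (n : nat) (s : Sym) : bool := if s is sb k then n <= k else false.
Definition symT (m n : nat) (s : Sym) : bool := [|| symC s, symA m s | symB n s].

(* Elements of K.  The sets C u A_m u B_n with |m - n| <= 1 are coded by
   KT0 m (n = m), KTA m (n = m + 1), KTB n (m = n + 1); every element of K
   has exactly one code. *)
Inductive K : Type :=
| K0
| KC
| KA of nat
| KB of nat
| KT0 of nat
| KTA of nat
| KTB of nat.

Definition Kset (x : K) : Sym -> bool :=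
  match x with
  | K0 => fun _ => false
  | KC => symC
  | KA m => symA m
  | KB n => symB n
  | KT0 m => symT m m
  | KTA m => symT m m.+1
  | KTB n => symT n.+1 n
  end.

Definition Kle (x y : K) : Prop := forall s, Kset x s -> Kset y s.

(* computational description used to define meet and join:
   (contains c?, least index of an a_k or None, least index of a b_k or None) *)
Definition Kdec (x : K) : bool * option nat * option nat :=
  match x with
  | K0 => (false, None, None)
  | KC => (true, None, None)
  | KA m => (false, Some m, None)
  | KB n => (false, None, Some n)
  | KT0 m => (true, Some m, Some m)
  | KTA m => (true, Some m, Some m.+1)
  | KTB n => (true, Some n.+1, Some n)
  end.

Definition Tcode (m n : nat) : K :=
  if n == m.+1 then KTA m else if m == n.+1 then KTB n else KT0 m.

(* least element of K containing the set described by (c, i, j) *)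
Definition Kclose (d : bool * option nat * option nat) : K :=
  match d with
  | (false, None, None) => K0
  | (true, None, None) => KC
  | (false, Some m, None) => KA m
  | (false, None, Some n) => KB n
  | (true, Some m, None) => KTA m
  | (true, None, Some n) => KTB n
  | (_, Some m, Some n) => Tcode (minn m n.+1) (minn n m.+1)
  end.

Definition omax (i j : option nat) : option nat :=
  match i, j with Some m, Some n => Some (maxn m n) | _, _ => None end.
Definition omin (i j : option nat) : option nat :=
  match i, j with
  | Some m, Some n => Some (minn m n)
  | Some m, None => Some m
  | None, o => o
  end.

Definition Kmeet (x y : K) : K :=
  let: (c, i, j) := Kdec x in let: (c', i', j') := Kdec y in
  Kclose (c && c', omax i i', omax j j').
Definition Kjoin (x y : K) : K :=
  let: (c, i, j) := Kdec x in let: (c', i', j') := Kdec y in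
  Kclose (c || c', omin i i', omin j j').

Definition osub (i j : option nat) : bool :=
  match i, j with
  | _, None => true
  | Some a, Some b => a <= b
  | None, Some _ => false
  end.

Definition Kleb (x y : K) : bool :=
  let: (c, i, j) := Kdec x in let: (c', i', j') := Kdec y in
  [&& c ==> c', osub i' i & osub j' j].

Ltac kfin := rewrite /= ?/Kleb /= /symT /symA /symB /symC /= ?orbF ?orbT ?andbF ?andbT ?orFb //=;
  try (apply/idP/idP; lia); try lia.

Lemma Kmeet_spec x y s : Kset (Kmeet x y) s = Kset x s && Kset y s.
Proof.
case: x => [||m|m|m|m|m]; case: y => [||n|n|n|n|n]; case: s => [|k|k];
  rewrite /Kmeet /= /Kclose /Tcode /=;
  repeat (case: eqP => /=; try move=> ?); kfin.
Qed.

Lemma Kle_dec x y : Kle x y <-> Kleb x y.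
Proof.
split.
- move=> H; case: x H => [||m|m|m|m|m] H.
  + by case: y H.
  + by move: (H sc); clear H; case: y => //= [|n|n] /(_ isT).
  + move: (H (sa m)); clear H; case: y => //= n; kfin.
  + move: (H (sb m)); clear H; case: y => //= n; kfin.
  + move: (H sc) (H (sa m)) (H (sb m)); clear H; case: y => //= n; kfin.
  + move: (H sc) (H (sa m)) (H (sb m.+1)); clear H; case: y => //= n; kfin.
  + move: (H sc) (H (sa m.+1)) (H (sb m)); clear H; case: y => //= n; kfin.
- case: x => [||m|m|m|m|m]; case: y => [||n|n|n|n|n] //= H; case=> [|k|k] //=; move: H; kfin.
Qed.

Lemma Kjoin_ubl x y : Kle x (Kjoin x y).
Proof.
apply/Kle_dec.
case: x => [||m|m|m|m|m]; case: y => [||n|n|n|n|n];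
  rewrite /Kjoin /= /Kclose /Tcode /=;
  repeat (case: eqP => /=; try move=> ?); kfin.
Qed.
Lemma Kjoin_ubr x y : Kle y (Kjoin x y).
Proof.
apply/Kle_dec.
case: x => [||m|m|m|m|m]; case: y => [||n|n|n|n|n];
  rewrite /Kjoin /= /Kclose /Tcode /=;
  repeat (case: eqP => /=; try move=> ?); kfin.
Qed.
Lemma Kjoin_least x y z : Kle x z -> Kle y z -> Kle (Kjoin x y) z.
Proof.
move=> /Kle_dec Hx /Kle_dec Hy; apply/Kle_dec; move: Hx Hy.
case: x => [||m|m|m|m|m]; case: y => [||n|n|n|n|n]; case: z => [||p|p|p|p|p];
  rewrite /Kjoin /= /Kclose /Tcode /=;
  repeat (case: eqP => /=; try move=> ?); kfin.
Qed.

(* Main.v *)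
Require Import Defs.
From HB Require Import structures.
From mathcomp Require Import all_boot all_order.
From mathcomp Require Import zify.
From Stdlib Require Import List.
Set Implicit Arguments.
Unset Strict Implicit.
Unset Printing Implicit Defensive.

Definition dtrip := (bool * option nat * option nat)%type.

Definition dset (d : dtrip) (s : Sym) : bool :=
  let: (c, i, j) := d in
  match s with
  | sc => c
  | sa p => if i is Some m then m <= p else false
  | sb p => if j is Some n then n <= p else false
  end.

Lemma Kset_dec k s : Kset k s = dset (Kdec k) s.
Proof.
case: k => [||m|m|m|m|m]; case: s => [|p|p] //=; rewrite /symT /symA /symB /symC /=; lia.
Qed.

Definition dclose (d : dtrip) : dtrip :=
  let: (c, i, j) := d in
  match i, j with
  | Some m, Some n => (true, Some (minn m n.+1), Some (minn n m.+1))
  | Some m, None => if c then (true, Some m, Some m.+1) else d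
  | None, Some n => if c then (true, Some n.+1, Some n) else d
  | None, None => d
  end.

Lemma Kdec_Tcode m n : m <= n.+1 -> n <= m.+1 -> Kdec (Tcode m n) = (true, Some m, Some n).
Proof.
rewrite /Tcode; case: eqP => [->|h0] //=; case: eqP => [->|h1] //= h2 h3.
have -> : n = m by lia. by [].
Qed.

Lemma Kdec_close d : Kdec (Kclose d) = dclose d.
Proof.
case: d => [[[|] [m|]] [n|]] //=; rewrite Kdec_Tcode //; lia.
Qed.

Definition dunion (d d' : dtrip) : dtrip :=
  let: (c, i, j) := d in let: (c', i', j') := d' in (c || c', omin i i', omin j j').
Definition dinter (d d' : dtrip) : dtrip :=
  let: (c, i, j) := d in let: (c', i', j') := d' in (c && c', omax i i', omax j j').

Lemma Kdec_join x y : Kdec (Kjoin x y) = dclose (dunion (Kdec x) (Kdec y)).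
Proof.
rewrite /Kjoin; case: (Kdec x) => [[c i] j]; case: (Kdec y) => [[c' i'] j'].
exact: Kdec_close.
Qed.
Lemma Kdec_meet x y : Kdec (Kmeet x y) = dclose (dinter (Kdec x) (Kdec y)).
Proof.
rewrite /Kmeet; case: (Kdec x) => [[c i] j]; case: (Kdec y) => [[c' i'] j'].
exact: Kdec_close.
Qed.

Lemma dset_union d d' s : dset (dunion d d') s = dset d s || dset d' s.
Proof.
case: d => [[c [m|]] [n|]]; case: d' => [[c' [m'|]] [n'|]]; case: s => [|p|p] //=;
  rewrite ?orbF //; lia.
Qed.

Section Closed.
Variable U : Sym -> Prop.
Hypothesis Ua : forall m, U (sa m) -> U (sa m.+1).
Hypothesis Ub : forall n, U (sb n) -> U (sb n.+1).
Hypothesis Uc : forall m n, U (sa m) -> U (sb n) -> U sc.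
Hypothesis Uac : forall n, U sc -> U (sb n) -> U (sa n.+1).
Hypothesis Ubc : forall m, U sc -> U (sa m) -> U (sb m.+1).

Lemma Ua_mono m p : U (sa m) -> m <= p -> U (sa p).
Proof.
move=> H /subnK <-; elim: (p - m) => [|k IH] //=; rewrite addSn; exact: Ua.
Qed.
Lemma Ub_mono m p : U (sb m) -> m <= p -> U (sb p).
Proof.
move=> H /subnK <-; elim: (p - m) => [|k IH] //=; rewrite addSn; exact: Ub.
Qed.

Lemma dclose_closed d : (forall s, dset d s -> U s) -> forall s, dset (dclose d) s -> U s.
Proof.
case: d => [[c [m|]] [n|]] H.
- move=> s.
  have Hm : U (sa m) by apply: (H (sa m)) => /=.
  have Hn : U (sb n) by apply: (H (sb n)) => /=.
  have Hc : U sc by exact: Uc Hm Hn.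
  case: s => [|p|p] //= hp.
  + case: (leqP m n.+1) => h.
    * apply: Ua_mono Hm _; lia.
    * apply: (Ua_mono (Uac Hc Hn)); lia.
  + case: (leqP n m.+1) => h.
    * apply: Ub_mono Hn _; lia.
    * apply: (Ub_mono (Ubc Hc Hm)); lia.
- case: c H => H s //=; last exact: H.
  have Hc : U sc by exact: (H sc).
  have Hm : U (sa m) by apply: (H (sa m)) => /=.
  case: s => [|p|p] //= hp.
  + exact: Ua_mono hp.
  + apply: Ub_mono hp; exact: Ubc.
- case: c H => H s //=; last exact: H.
  have Hc : U sc by exact: (H sc).
  have Hn : U (sb n) by apply: (H (sb n)) => /=.
  case: s => [|p|p] //= hp.
  + apply: Ua_mono hp; exact: Uac.
  + exact: Ub_mono hp.
- by case: c H.
Qed.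

Lemma Kjoin_closed x y : (forall s, Kset x s -> U s) -> (forall s, Kset y s -> U s) ->
  forall s, Kset (Kjoin x y) s -> U s.
Proof.
move=> Hx Hy s; rewrite Kset_dec Kdec_join; apply: dclose_closed => t.
rewrite dset_union -!Kset_dec => /orP[]; [exact: Hx | exact: Hy].
Qed.
End Closed.

Inductive M3 := T0 | TC | TA | TB | TT.
Scheme Equality for M3.

Definition tmeet (a b : M3) : M3 :=
  match a, b with
  | TT, x => x | x, TT => x
  | TC, TC => TC | TA, TA => TA | TB, TB => TB
  | _, _ => T0 end.
Definition tjoin (a b : M3) : M3 :=
  match a, b with
  | T0, x => x | x, T0 => x
  | TC, TC => TC | TA, TA => TA | TB, TB => TB
  | _, _ => TT end.

Definition tyd (d : dtrip) : M3 :=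
  let: (c, i, j) := d in
  match i, j with
  | Some _, Some _ => TT
  | Some _, None => if c then TT else TA
  | None, Some _ => if c then TT else TB
  | None, None => if c then TC else T0
  end.
Definition ty (x : K) : M3 := tyd (Kdec x).

Lemma ty_join x y : ty (Kjoin x y) = tjoin (ty x) (ty y).
Proof. rewrite /ty Kdec_join; by case: x => [||m|m|m|m|m]; case: y => [||n|n|n|n|n]. Qed.
Lemma ty_meet x y : ty (Kmeet x y) = tmeet (ty x) (ty y).
Proof. rewrite /ty Kdec_meet; by case: x => [||m|m|m|m|m]; case: y => [||n|n|n|n|n]. Qed.

Definition tfixedb (a b c : M3) : bool :=
  [&& M3_beq (tjoin a (tmeet b c)) a, M3_beq (tjoin b (tmeet a c)) b &
      M3_beq (tjoin c (tmeet a b)) c].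

Lemma tstep_fixed a b c :
  tfixedb (tjoin a (tmeet b c)) (tjoin b (tmeet a c)) (tjoin c (tmeet a b)).
Proof. by case: a; case: b; case: c. Qed.

Definition dleb (d d' : dtrip) : bool :=
  let: (c, i, j) := d in let: (c', i', j') := d' in
  [&& c ==> c', osub i' i & osub j' j].

Lemma Kleb_eq x y : Kleb x y = dleb (Kdec x) (Kdec y).
Proof. by []. Qed.

Definition dvalid (d : dtrip) : bool :=
  match d with
  | (c, Some m, Some n) => [&& c, m <= n.+1 & n <= m.+1]
  | (true, Some _, None) => false
  | (true, None, Some _) => false
  | _ => true
  end.

Lemma Kdec_valid x : dvalid (Kdec x).
Proof. case: x => [||m|m|m|m|m] //=; lia. Qed.

Definition dcl := locked dclose.

Lemma Kdec_join' x y : Kdec (Kjoin x y) = dcl (dunion (Kdec x) (Kdec y)).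
Proof. by rewrite /dcl -lock Kdec_join. Qed.
Lemma Kdec_meet' x y : Kdec (Kmeet x y) = dcl (dinter (Kdec x) (Kdec y)).
Proof. by rewrite /dcl -lock Kdec_meet. Qed.

Lemma dcl_id a b : a <= b.+1 -> b <= a.+1 -> dcl (true, Some a, Some b) = (true, Some a, Some b).
Proof. rewrite /dcl -lock => h1 h2 /=; congr (_, Some _, Some _); lia. Qed.
Lemma dcl_SS c a b : dcl (c, Some a, Some b) = (true, Some (minn a b.+1), Some (minn b a.+1)).
Proof. by rewrite /dcl -lock. Qed.
Lemma dcl_TSN a : dcl (true, Some a, None) = (true, Some a, Some a.+1).
Proof. by rewrite /dcl -lock. Qed.
Lemma dcl_TNS a : dcl (true, None, Some a) = (true, Some a.+1, Some a).
Proof. by rewrite /dcl -lock. Qed.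
Lemma dcl_FSN a : dcl (false, Some a, None) = (false, Some a, None).
Proof. by rewrite /dcl -lock. Qed.
Lemma dcl_FNS a : dcl (false, None, Some a) = (false, None, Some a).
Proof. by rewrite /dcl -lock. Qed.
Lemma dcl_NN c : dcl (c, None, None) = (c, None, None).
Proof. by rewrite /dcl -lock. Qed.

Ltac dcl_step := first [ rewrite dcl_id; [|lia|lia] | rewrite dcl_SS | rewrite dcl_TSN | rewrite dcl_TNS
  | rewrite dcl_FSN | rewrite dcl_FNS | rewrite dcl_NN ]; rewrite /=.

Lemma fix_d dx dy dz : dvalid dx -> dvalid dy -> dvalid dz -> tfixedb (tyd dx) (tyd dy) (tyd dz) ->
  let x1 := dcl (dunion dx (dcl (dinter dy dz))) in
  let y1 := dcl (dunion dy (dcl (dinter dx dz))) in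
  let z1 := dcl (dunion dz (dcl (dinter dx dy))) in
  [&& dleb (dcl (dinter y1 z1)) x1, dleb (dcl (dinter x1 z1)) y1 & dleb (dcl (dinter x1 y1)) z1].
Proof.
case: dx => [[[|] [a|]] [b|]]; case: dy => [[[|] [a'|]] [b'|]]; case: dz => [[[|] [a''|]] [b''|]] //=;
  move=> *; (repeat dcl_step); (repeat (apply/andP; split)); lia.
Qed.

Lemma Kdec_inj x y : Kdec x = Kdec y -> x = y.
Proof.
case: x => [||m|m|m|m|m]; case: y => [||n|n|n|n|n] //= H;
  (by case: H => *; subst) || (case: H => *; lia).
Qed.

Lemma Kle_refl x : Kle x x.
Proof. by move=> s. Qed.

Lemma Kle_anti x y : Kle x y -> Kle y x -> x = y.
Proof.
move=> /Kle_dec + /Kle_dec; rewrite !Kleb_eq => H1 H2; apply: Kdec_inj.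
have := Kdec_valid x; have := Kdec_valid y; move: H1 H2.
case: (Kdec x) => [[[|] [a|]] [b|]]; case: (Kdec y) => [[[|] [a'|]] [b'|]] //= *;
  congr (_, Some _, Some _) || congr (_, Some _, None) || congr (_, None, Some _); lia.
Qed.

Lemma Kjoin_absorb x m : Kle m x -> Kjoin x m = x.
Proof.
move=> H; apply: Kle_anti; [exact: Kjoin_least (@Kle_refl x) H | exact: Kjoin_ubl].
Qed.

Lemma fix_after x y z : tfixedb (ty x) (ty y) (ty z) ->
  let x1 := Kjoin x (Kmeet y z) in
  let y1 := Kjoin y (Kmeet x z) in
  let z1 := Kjoin z (Kmeet x y) in
  [&& Kleb (Kmeet y1 z1) x1, Kleb (Kmeet x1 z1) y1 & Kleb (Kmeet x1 y1) z1].
Proof.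
move=> H /=; rewrite !Kleb_eq !(Kdec_meet', Kdec_join').
exact: (fix_d (Kdec_valid x) (Kdec_valid y) (Kdec_valid z) H).
Qed.

Lemma K_2modular : hmodular Kmeet Kjoin 2.
Proof.
move=> [[x y] z]; rewrite /hiter /=.
set x1 := Kjoin x (Kmeet y z); set y1 := Kjoin y (Kmeet x z); set z1 := Kjoin z (Kmeet x y).
have Ht : tfixedb (ty x1) (ty y1) (ty z1) by rewrite /x1 /y1 /z1 !(ty_join, ty_meet); exact: tstep_fixed.
have /and3P[h1 h2 h3] := fix_after Ht.
move: h1 h2 h3; set x2 := Kjoin x1 _; set y2 := Kjoin y1 _; set z2 := Kjoin z1 _.
move=> /Kle_dec h1 /Kle_dec h2 /Kle_dec h3.
by rewrite !Kjoin_absorb.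
Qed.

Lemma K_gen3 : generated_by_three Kmeet Kjoin.
Proof.
exists KC, (KA 0), (KB 0) => S HC HA HB Hm Hj.
have HAB : forall m, S (KA m) /\ S (KB m).
  elim=> [|m [IHa IHb]]; first by [].
  split.
  - have -> : KA m.+1 = Kmeet (KA 0) (Kjoin KC (KB m)) by rewrite /Kmeet /= max0n.
    by apply: Hm => //; apply: Hj.
  - have -> : KB m.+1 = Kmeet (KB 0) (Kjoin KC (KA m)) by rewrite /Kmeet /= max0n.
    by apply: Hm => //; apply: Hj.
case=> [||m|m|m|m|m].
- have -> : K0 = Kmeet (KA 0) (KB 0) by []. exact: Hm.
- exact: HC.
- exact: (HAB m).1.
- exact: (HAB m).2.
- have -> : KT0 m = Kjoin (KA m) (KB m).
    apply: Kdec_inj; rewrite Kdec_join /= /dclose; congr (_, Some _, Some _); lia.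
  apply: Hj; [exact: (HAB m).1 | exact: (HAB m).2].
- have -> : KTA m = Kjoin KC (KA m) by [].
  apply: Hj => //; exact: (HAB m).1.
- have -> : KTB m = Kjoin KC (KB m) by [].
  apply: Hj => //; exact: (HAB m).2.
Qed.

Definition kidx (k : K) : nat :=
  match k with
  | K0 | KC => 0
  | KA m | KB m | KT0 m => m
  | KTA m | KTB m => m.+1
  end.

Lemma K_infinite : infinite_type K.
Proof.
move=> [s Hs].
have HM : forall k, In k s -> kidx k <= List.fold_right (fun k acc => maxn (kidx k) acc) 0 s.
  elim: s {Hs} => [|k0 s IH] k //= [->|/IH]; lia.
have := HM _ (Hs (KA (List.fold_right (fun k acc => maxn (kidx k) acc) 0 s).+1)); rewrite /=; lia.
Qed.

Import Order.TTheory.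

Lemma KleA m p : m <= p -> Kle (KA p) (KA m).
Proof. move=> h [|q|q] //=; rewrite /symA; lia. Qed.
Lemma KleB m p : m <= p -> Kle (KB p) (KB m).
Proof. move=> h [|q|q] //=; rewrite /symB; lia. Qed.
Lemma Kle_A_CB n p : n < p -> Kle (KA p) (Kjoin KC (KB n)).
Proof. move=> h [|q|q] //=; rewrite /symA /symB /symT /=; lia. Qed.
Lemma Kle_B_CA n p : n < p -> Kle (KB p) (Kjoin KC (KA n)).
Proof. move=> h [|q|q] //=; rewrite /symA /symB /symT /=; lia. Qed.
Lemma Kle_C_AB m n : Kle KC (Kjoin (KA m) (KB n)).
Proof. by move=> [|q|q] //= _; rewrite Kset_dec Kdec_join /dclose. Qed.

Definition Ksym (s : Sym) : K :=
  match s with sc => KC | sa m => KA m | sb n => KB n end.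

Lemma Kset_Ksym a s : Kset a s -> Kle (Ksym s) a.
Proof.
move=> H t; move: H; rewrite !Kset_dec.
case: a => [||m|m|m|m|m]; case: s => [|p|p]; case: t => [|q|q] //=; lia.
Qed.

Lemma Kle_union k k1 k2 : (forall s, Kset k s -> Kset k1 s \/ Kset k2 s) -> Kle k (Kjoin k1 k2).
Proof.
move=> H s /H [] h; [exact: Kjoin_ubl h | exact: Kjoin_ubr h].
Qed.

Section Tens.
Variables (d : Order.disp_t) (L : bLatticeType d).
Local Notation leL := (fun x y : L => is_true (x <= y)%O).
Local Notation bi := (biideal Kle Kjoin K0 leL (@Order.join d L) (\bot)%O).

Variable I : K * L -> Prop.
Hypothesis HI : bi I.

Lemma Idown k k' (b b' : L) : I (k, b) -> Kle k' k -> (b' <= b)%O -> I (k', b').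
Proof. case: HI => Hd _ _ _ _ H1 H2 H3; exact: (Hd (k', b') (k, b)). Qed.

Lemma Ibot k : I (k, \bot%O).
Proof. by case: HI. Qed.
Lemma IK0 b : I (K0, b).
Proof. by case: HI. Qed.
Lemma IjoinL k (b0 b1 : L) : I (k, b0) -> I (k, b1) -> I (k, (b0 `|` b1)%O).
Proof. case: HI => _ _ _ H _; exact: H. Qed.
Lemma IjoinK k1 k2 j (b : L) : I (k1, b) -> I (k2, b) -> Kle j (Kjoin k1 k2) -> I (j, b).
Proof.
case: HI => _ _ _ _ H h1 h2 hj.
apply: (Idown (H _ _ _ h1 h2) hj); exact: lexx.
Qed.

Variable P : list (K * L).
Hypothesis HP : forall p, In p P -> I p.

Definition gjl (Q : list (K * L)) (s : Sym) : L :=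
  List.fold_right (fun pr acc => ((if Kset pr.1 s then pr.2 else \bot) `|` acc)%O) \bot%O Q.
Definition gj := gjl P.

Lemma gj_in s : I (Ksym s, gj s).
Proof.
rewrite /gj; elim: P HP => [|[a b] Q IH] HQ /=; first exact: Ibot.
apply: IjoinL; last by apply: IH => p hp; apply: HQ; right.
case: ifP => h; last exact: Ibot.
apply: (Idown (HQ (a, b) (or_introl erefl))); [exact: Kset_Ksym | exact: lexx].
Qed.

Lemma gj_ge a b s : In (a, b) P -> Kset a s -> (b <= gj s)%O.
Proof.
rewrite /gj; elim: P => [|[a' b'] Q IH] //= [[-> ->]|hin] hs.
- by rewrite hs leUl.
- exact: le_trans (IH hin hs) (leUr _ _).
Qed.

Lemma gj_le_gen s t : (forall a, Kset a s -> Kset a t) -> (gj s <= gj t)%O.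
Proof.
move=> H; rewrite /gj; elim: P => [|[a b] Q IH] /=; first exact: lexx.
apply: leU2; last exact: IH.
case: ifP => h; first by rewrite (H _ h) lexx.
exact: le0x.
Qed.

Lemma gj_monoA m p : m <= p -> (gj (sa m) <= gj (sa p))%O.
Proof. move=> h; apply: gj_le_gen => a; rewrite !Kset_dec; case: (Kdec a) => [[c [i|]] j] //=; lia. Qed.
Lemma gj_monoB m p : m <= p -> (gj (sb m) <= gj (sb p))%O.
Proof. move=> h; apply: gj_le_gen => a; rewrite !Kset_dec; case: (Kdec a) => [[c i] [j|]] //=; lia. Qed.

Definition Nbl (Q : list (K * L)) := List.fold_right (fun pr acc => maxn (kidx pr.1) acc) 0 Q.
Definition Nb := Nbl P.

Lemma Kset_stab a p : kidx a <= p -> Kset a (sa p) = Kset a (sa (kidx a)) /\ Kset a (sb p) = Kset a (sb (kidx a)).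
Proof. case: a => [||m|m|m|m|m] /= h; rewrite /symA /symB /symT /=; split; lia. Qed.

Lemma gjl_stab Q p q : Nbl Q <= p -> Nbl Q <= q ->
  gjl Q (sa p) = gjl Q (sa q) /\ gjl Q (sb p) = gjl Q (sb q).
Proof.
elim: Q => [|[a b] Q IH] //= hp hq.
have [h1 h2] := Kset_stab (a := a) (p := p) ltac:(lia).
have [h3 h4] := Kset_stab (a := a) (p := q) ltac:(lia).
have [IH1 IH2] := IH ltac:(lia) ltac:(lia).
by rewrite h1 h2 h3 h4 IH1 IH2.
Qed.

Lemma gj_bound p : (gj (sa p) <= gj (sa Nb))%O /\ (gj (sb p) <= gj (sb Nb))%O.
Proof.
case: (leqP p Nb) => h; first by split; [apply: gj_monoA | apply: gj_monoB].
rewrite /gj; have [-> ->] := gjl_stab (Q := P) (p := p) (q := Nb) ltac:(move: h; rewrite /Nb; lia) (leqnn _).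
by rewrite !lexx.
Qed.

Lemma Kle_T k m n : (forall s, Kset k s -> Kset KC s \/ Kset (KA m) s \/ Kset (KB n) s) ->
  Kle k (Kjoin KC (Kjoin (KA m) (KB n))).
Proof.
move=> H; apply: Kle_union => s /H [h|[h|h]]; [by left | right | right].
- exact: Kjoin_ubl h.
- exact: Kjoin_ubr h.
Qed.

Lemma I_T k m n (b : L) : I (KC, b) -> I (KA m, b) -> I (KB n, b) ->
  (forall s, Kset k s -> Kset KC s \/ Kset (KA m) s \/ Kset (KB n) s) -> I (k, b).
Proof.
move=> hc ha hb H; apply: (IjoinK hc _ (Kle_T H)).
exact: IjoinK ha hb (@Kle_refl _).
Qed.

Variable h : nat.
Hypothesis Hh : hmodular (@Order.meet d L) (@Order.join d L) h.
Local Notation hs := (hstep (@Order.meet d L) (@Order.join d L)).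
Local Notation hi := (hiter (@Order.meet d L) (@Order.join d L)).

Definition u0 : L * L * L := (gj (sa Nb), gj (sb Nb), gj sc).

Lemma hi_S k u : hi k.+1 u = hs (hi k u).
Proof. by []. Qed.

Lemma hi_ge k : (u0.1.1 <= (hi k u0).1.1)%O /\ (u0.1.2 <= (hi k u0).1.2)%O /\ (u0.2 <= (hi k u0).2)%O.
Proof.
elim: k => [|k]; first by rewrite !lexx.
rewrite hi_S; case: (hi k u0) => [[x y] z] /= [h1 [h2 h3]].
split; [|split]; apply: le_trans (leUl _ _); assumption.
Qed.

Lemma inv k : (exists m, I (KA m, (hi k u0).1.1)) /\ (exists n, I (KB n, (hi k u0).1.2)) /\ I (KC, (hi k u0).2).
Proof.
elim: k => [|k [[m Hm] [[n Hn] Hc]]].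
  split; [exists Nb; exact: (gj_in (sa Nb)) | split; [exists Nb; exact: (gj_in (sb Nb)) | exact: (gj_in sc)]].
rewrite hi_S; move: Hm Hn Hc; case: (hi k u0) => [[x y] z] /= Hm Hn Hc.
split; [exists (maxn m n.+1) | split; [exists (maxn n m.+1) |]].
- apply: IjoinL.
    apply: (Idown Hm); [apply: KleA; lia | exact: lexx].
  apply: (IjoinK (k1 := KC) (k2 := KB n)).
  + apply: (Idown Hc (@Kle_refl _)); exact: leIr.
  + apply: (Idown Hn (@Kle_refl _)); exact: leIl.
  + apply: Kle_A_CB; lia.
- apply: IjoinL.
    apply: (Idown Hn); [apply: KleB; lia | exact: lexx].
  apply: (IjoinK (k1 := KC) (k2 := KA m)).
  + apply: (Idown Hc (@Kle_refl _)); exact: leIr.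
  + apply: (Idown Hm (@Kle_refl _)); exact: leIl.
  + apply: Kle_B_CA; lia.
- apply: IjoinL => //.
  apply: (IjoinK (k1 := KA m) (k2 := KB n)).
  + apply: (Idown Hm (@Kle_refl _)); exact: leIl.
  + apply: (Idown Hn (@Kle_refl _)); exact: leIr.
  + exact: Kle_C_AB.
Qed.

Definition Xs := (hi h u0).1.1.
Definition Ys := (hi h u0).1.2.
Definition Zs := (hi h u0).2.

Lemma fixpt : (Ys `&` Zs <= Xs)%O /\ (Xs `&` Zs <= Ys)%O /\ (Xs `&` Ys <= Zs)%O.
Proof.
have := Hh u0; rewrite hi_S /Xs /Ys /Zs; case: (hi h u0) => [[x y] z] /= [e1 e2 e3].
split; [|split].
- by rewrite -e1 leUr.
- by rewrite -e2 leUr.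
- by rewrite -e3 leUr.
Qed.

Fixpoint xy (n : nat) : L * L :=
  match n with
  | 0 => (gj (sa 0), gj (sb 0))
  | n'.+1 => ((gj (sa n) `|` (xy n').1 `|` (Zs `&` (xy n').2))%O,
              (gj (sb n) `|` (xy n').2 `|` (Zs `&` (xy n').1))%O)
  end.
Definition xs n := (xy n).1.
Definition ys n := (xy n).2.

Lemma xs_S n : xs n.+1 = (gj (sa n.+1) `|` xs n `|` (Zs `&` ys n))%O.
Proof. by []. Qed.
Lemma ys_S n : ys n.+1 = (gj (sb n.+1) `|` ys n `|` (Zs `&` xs n))%O.
Proof. by []. Qed.

Lemma xs_mono1 n : (xs n <= xs n.+1)%O /\ (ys n <= ys n.+1)%O.
Proof.
rewrite xs_S ys_S; split; apply: le_trans (leUl _ _); exact: leUr.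
Qed.

Lemma xs_mono m p : m <= p -> (xs m <= xs p)%O /\ (ys m <= ys p)%O.
Proof.
move=> /subnK <-; elim: (p - m) => [|k [IH1 IH2]]; first by rewrite !lexx.
rewrite addSn; have [h1 h2] := xs_mono1 (k + m).
split; [exact: le_trans IH1 h1 | exact: le_trans IH2 h2].
Qed.

Lemma xs_gj n : (gj (sa n) <= xs n)%O /\ (gj (sb n) <= ys n)%O.
Proof.
case: n => [|n]; first by rewrite !lexx.
rewrite xs_S ys_S; split; apply: le_trans (leUl _ _); exact: leUl.
Qed.

Lemma IZs : I (KC, Zs).
Proof. by have [_ [_ H]] := inv h. Qed.

Lemma xs_in n : I (KA n, xs n) /\ I (KB n, ys n).
Proof.
elim: n => [|n [IH1 IH2]]; first by split; [exact: (gj_in (sa 0)) | exact: (gj_in (sb 0))].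
rewrite xs_S ys_S; split.
- apply: IjoinL; [apply: IjoinL; [exact: (gj_in (sa n.+1)) | ] | ].
  + apply: (Idown IH1); [apply: KleA; lia | exact: lexx].
  + apply: (IjoinK (k1 := KC) (k2 := KB n)).
    * apply: (Idown IZs (@Kle_refl _)); exact: leIl.
    * apply: (Idown IH2 (@Kle_refl _)); exact: leIr.
    * apply: Kle_A_CB; lia.
- apply: IjoinL; [apply: IjoinL; [exact: (gj_in (sb n.+1)) | ] | ].
  + apply: (Idown IH2); [apply: KleB; lia | exact: lexx].
  + apply: (IjoinK (k1 := KC) (k2 := KA n)).
    * apply: (Idown IZs (@Kle_refl _)); exact: leIl.
    * apply: (Idown IH1 (@Kle_refl _)); exact: leIr.
    * apply: Kle_B_CA; lia.
Qed.

Lemma xs_le n : (xs n <= Xs)%O /\ (ys n <= Ys)%O.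
Proof.
have [hX [hY _]] := hi_ge h.
have [f1 [f2 _]] := fixpt.
have gA : forall p, (gj (sa p) <= Xs)%O by move=> p; exact: le_trans (gj_bound p).1 hX.
have gB : forall p, (gj (sb p) <= Ys)%O by move=> p; exact: le_trans (gj_bound p).2 hY.
elim: n => [|n [IH1 IH2]]; first by split; [exact: gA | exact: gB].
rewrite xs_S ys_S !leUx gA gB IH1 IH2 /=; split.
- apply: le_trans f1; rewrite meetC; apply: leI2 => //; exact: lexx.
- apply: le_trans f2; rewrite meetC; apply: leI2 => //; exact: lexx.
Qed.

Lemma cons_ii m n : (xs m `&` ys n <= Zs)%O.
Proof.
have [_ [_ f3]] := fixpt; apply: le_trans f3; apply: leI2; [exact: (xs_le m).1 | exact: (xs_le n).2].
Qed.

Lemma step_seq n : Nb <= n -> hs (xs n, ys n, Zs) = (xs n.+1, ys n.+1, Zs).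
Proof.
move=> hn.
have ga : (gj (sa n.+1) <= xs n)%O.
  apply: le_trans (gj_bound _).1 _; apply: le_trans (xs_gj Nb).1 (xs_mono hn).1.
have gb : (gj (sb n.+1) <= ys n)%O.
  apply: le_trans (gj_bound _).2 _; apply: le_trans (xs_gj Nb).2 (xs_mono hn).2.
rewrite /= xs_S ys_S (join_r ga) (join_r gb) (join_l (cons_ii n n)) (meetC Zs) (meetC Zs).
by [].
Qed.

Lemma hi_seq k : hi k (xs Nb, ys Nb, Zs) = (xs (Nb + k), ys (Nb + k), Zs).
Proof.
elim: k => [|k IH]; first by rewrite addn0.
by rewrite hi_S IH step_seq ?addnS //; lia.
Qed.

Lemma hmod_ext k u : hi (h + k) u = hi h u.
Proof.
elim: k => [|k IH]; first by rewrite addn0.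
by rewrite addnS hi_S IH -hi_S Hh.
Qed.

Definition Mb := Nb + h.

Lemma xs_const p : Mb <= p -> xs p = xs Mb /\ ys p = ys Mb.
Proof.
move=> hp; have E := hi_seq (h + (p - Mb)); rewrite hmod_ext hi_seq in E.
case: E => e1 e2.
have -> : p = Nb + (h + (p - Mb)) by rewrite /Mb in hp *; lia.
by rewrite -e1 -e2 /Mb.
Qed.

Definition val (s : Sym) : L := match s with sc => Zs | sa m => xs m | sb n => ys n end.
Definition Jc (p : K * L) : Prop := forall s, Kset p.1 s -> (p.2 <= val s)%O.

Lemma Jc_bi : bi Jc.
Proof.
split.
- move=> p q Hq Hk Hb s hs; exact: le_trans Hb (Hq s (Hk s hs)).
- move=> a s _; exact: le0x.
- by move=> b s.
- move=> a b0 b1 H0 H1 s hs /=; rewrite leUx (H0 s hs) (H1 s hs) //.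
- move=> a0 a1 b H0 H1.
  have Ua : forall m, (b <= val (sa m))%O -> (b <= val (sa m.+1))%O.
    move=> m /= hb; exact: le_trans hb (xs_mono1 m).1.
  have Ub : forall m, (b <= val (sb m))%O -> (b <= val (sb m.+1))%O.
    move=> m /= hb; exact: le_trans hb (xs_mono1 m).2.
  have Uc : forall m n, (b <= val (sa m))%O -> (b <= val (sb n))%O -> (b <= val sc)%O.
    move=> m n /= h1 h2; apply: le_trans (cons_ii m n); by rewrite lexI h1 h2.
  have Uac : forall n, (b <= val sc)%O -> (b <= val (sb n))%O -> (b <= val (sa n.+1))%O.
    move=> n /= h1 h2; rewrite xs_S; apply: le_trans (leUr _ _); by rewrite lexI h1 h2.
  have Ubc : forall n, (b <= val sc)%O -> (b <= val (sa n))%O -> (b <= val (sb n.+1))%O.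
    move=> n /= h1 h2; rewrite ys_S; apply: le_trans (leUr _ _); by rewrite lexI h1 h2.
  move=> s hs; exact: (@Kjoin_closed (fun s => (b <= val s)%O) Ua Ub Uc Uac Ubc a0 a1 H0 H1 s hs).
Qed.

Lemma J_P p : In p P -> Jc p.
Proof.
case: p => a b hin s hs; case: s hs => [|m|n] hs /=.
- apply: le_trans (gj_ge hin hs) _; exact: (hi_ge h).2.2.
- exact: le_trans (gj_ge hin hs) (xs_gj m).1.
- exact: le_trans (gj_ge hin hs) (xs_gj n).2.
Qed.

Lemma J_I p : Jc p -> I p.
Proof.
case: p => k b H.
have hc : Kset k sc -> (b <= Zs)%O by move=> hs; exact: H sc hs.
have ha : forall m, Kset k (sa m) -> (b <= xs m)%O by move=> m hs; exact: H (sa m) hs.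
have hb : forall m, Kset k (sb m) -> (b <= ys m)%O by move=> m hs; exact: H (sb m) hs.
have IC : Kset k sc -> I (KC, b) by move=> hs; exact: Idown IZs (@Kle_refl _) (hc hs).
have IA : forall m, Kset k (sa m) -> I (KA m, b).
  by move=> m hs; exact: Idown (xs_in m).1 (@Kle_refl _) (ha m hs).
have IB : forall m, Kset k (sb m) -> I (KB m, b).
  by move=> m hs; exact: Idown (xs_in m).2 (@Kle_refl _) (hb m hs).
case: k H hc ha hb IC IA IB => [||m|m|m|m|m] H hc ha hb IC IA IB.
- exact: IK0.
- exact: IC.
- apply: IA => /=; rewrite /symA; lia.
- apply: IB => /=; rewrite /symB; lia.
- apply: (I_T (m := m) (n := m)); [apply: IC | apply: IA | apply: IB | ];
    rewrite /= /symT /symA /symB /symC /= ?leqnn ?orbT //.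
  case=> [|q|q] /= hq; [by left | right; left | right; right]; move: hq; rewrite /symT /symA /symB /symC /= ?orbF //.
- apply: (I_T (m := m) (n := m.+1)); [apply: IC | apply: IA | apply: IB | ];
    rewrite /= /symT /symA /symB /symC /= ?leqnn ?orbT //.
  case=> [|q|q] /= hq; [by left | right; left | right; right]; move: hq; rewrite /symT /symA /symB /symC /= ?orbF //.
- apply: (I_T (m := m.+1) (n := m)); [apply: IC | apply: IA | apply: IB | ];
    rewrite /= /symT /symA /symB /symC /= ?leqnn ?orbT //.
  case=> [|q|q] /= hq; [by left | right; left | right; right]; move: hq; rewrite /symT /symA /symB /symC /= ?orbF //.
Qed.

Definition F (k : K) : L :=
  match k with
  | K0 => \bot%O
  | KC => Zs
  | KA m => xs m
  | KB n => ys n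
  | KT0 m => (Zs `&` xs m `&` ys m)%O
  | KTA m => (Zs `&` xs m `&` ys m.+1)%O
  | KTB n => (Zs `&` xs n.+1 `&` ys n)%O
  end.

Lemma meet3 (a b c : L) : ((a `&` b `&` c) <= a)%O /\ ((a `&` b `&` c) <= b)%O /\ ((a `&` b `&` c) <= c)%O.
Proof.
split; [|split].
- exact: le_trans (leIl _ _) (leIl _ _).
- exact: le_trans (leIl _ _) (leIr _ _).
- exact: leIr.
Qed.

Lemma J_F k : Jc (k, F k).
Proof.
move=> s; case: k => [||m|m|m|m|m] /=; case: s => [|q|q] //=;
  rewrite /symT /symA /symB /symC /= ?orbF ?orFb => hq;
  first [ exact: lexx | exact: (meet3 _ _ _).1 | exact: (xs_mono hq).1 | exact: (xs_mono hq).2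
        | exact: le_trans (meet3 _ _ _).2.1 (xs_mono hq).1
        | exact: le_trans (meet3 _ _ _).2.2 (xs_mono hq).2 ].
Qed.

Ltac sidec := simpl; try unfold symT, symA, symB, symC; simpl; lia.

Lemma J_leF k b : k <> K0 -> Jc (k, b) -> (b <= F k)%O.
Proof.
case: k => [||m|m|m|m|m] nk H; first by case: nk.
all: rewrite /= ?lexI.
- apply: (H sc); sidec.
- apply: (H (sa m)); sidec.
- apply: (H (sb m)); sidec.
- rewrite (H sc) ?(H (sa m)) ?(H (sb m)) //; sidec.
- rewrite (H sc) ?(H (sa m)) ?(H (sb m.+1)) //; sidec.
- rewrite (H sc) ?(H (sa m.+1)) ?(H (sb m)) //; sidec.
Qed.

Definition cl (k : K) : K :=
  match k with
  | KA m => KA (minn m Mb)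
  | KB n => KB (minn n Mb)
  | KT0 m => KT0 (minn m Mb)
  | KTA m => KTA (minn m Mb)
  | KTB n => KTB (minn n Mb)
  | k => k
  end.

Lemma cl_ge k : Kle k (cl k).
Proof.
case: k => [||m|m|m|m|m] [|q|q] //=; rewrite /symT /symA /symB /symC /=; lia.
Qed.

Lemma xs_clamp m : [/\ xs (minn m Mb) = xs m, ys (minn m Mb) = ys m,
  xs (minn m Mb).+1 = xs m.+1 & ys (minn m Mb).+1 = ys m.+1].
Proof.
case: (leqP m Mb) => hm; first by [].
have [a1 b1] := xs_const (ltnW hm).
have hm2 : Mb <= m.+1 by lia.
have [a2 b2] := xs_const hm2.
have [a3 b3] := xs_const (leqnSn Mb).
by rewrite a1 b1 a2 b2 a3 b3.
Qed.

Lemma F_cl k : F (cl k) = F k.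
Proof.
case: k => [||m|m|m|m|m] //=; have [e1 e2 e3 e4] := xs_clamp m; by rewrite ?e1 ?e2 ?e3 ?e4.
Qed.

Definition klist : list K :=
  KC :: List.flat_map (fun m => [:: KA m; KB m; KT0 m; KTA m; KTB m]) (List.seq 0 Mb.+1).

Lemma cl_in k : k <> K0 -> In (cl k) klist.
Proof.
case: k => [||m|m|m|m|m] // _; [by left | right; apply List.in_flat_map; exists (minn m Mb);
  (split; [apply List.in_seq; lia | simpl; repeat (first [left; reflexivity | right])])..].
Qed.

Definition Gamma := List.map (fun k => (k, F k)) klist.

Hypothesis HIP : forall p, I p -> forall J, bi J -> (forall q, In q P -> J q) -> J p.

Lemma I_capped : capped Kle K0 leL (\bot)%O I.
Proof.
exists Gamma => p; split.
- move=> Ip; have Jp : Jc p := HIP Ip Jc_bi J_P.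
  case: p Ip Jp => k b Ip Jp.
  have [->|nk] : k = K0 \/ k <> K0 by clear Ip Jp; case: k; [left | right..].
    exists (K0, b); split; [right; right; done | split; [exact: (@Kle_refl _) | exact: lexx]].
  exists (cl k, F (cl k)); split; [left; apply: (List.in_map (fun k => (k, F k))); exact: cl_in | split].
  + exact: cl_ge.
  + rewrite /= F_cl; exact: J_leF.
- move=> [q [Hq [Hk Hb]]]; apply: J_I.
  have [Hd H2 H3 _ _] := Jc_bi.
  have Jq : Jc q.
    case: Hq => [Hin | [e | e]].
    + move/List.in_map_iff: Hin => [k [<- _]]; exact: J_F.
    + case: q e Hk Hb => k b' /= -> _ _; exact: H2.
    + case: q e Hk Hb => k b' /= -> _ _; exact: H3.
  exact: Hd p q Jq Hk Hb.
Qed.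

End Tens.

Section Bigen.
Variables (A B : Type).
Variables (leA : A -> A -> Prop) (joinA : A -> A -> A) (zeroA : A).
Variables (leB : B -> B -> Prop) (joinB : B -> B -> B) (zeroB : B).
Local Notation bi := (biideal leA joinA zeroA leB joinB zeroB).
Local Notation bg := (bigen leA joinA zeroA leB joinB zeroB).

Lemma bigen_bi X : bi (bg X).
Proof.
split.
- move=> p q Hq h1 h2 J HJ HX; case: (HJ) => Hd _ _ _ _; exact: Hd p q (Hq J HJ HX) h1 h2.
- move=> a J HJ _; by case: HJ.
- move=> b J HJ _; by case: HJ.
- move=> a b0 b1 H0 H1 J HJ HX; case: (HJ) => _ _ _ H _; exact: H (H0 J HJ HX) (H1 J HJ HX).
- move=> a0 a1 b H0 H1 J HJ HX; case: (HJ) => _ _ _ _ H; exact: H (H0 J HJ HX) (H1 J HJ HX).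
Qed.

Lemma bigen_sub (X : A * B -> Prop) p : X p -> bg X p.
Proof. by move=> Xp J _ HX; apply: HX. Qed.

Lemma compact_points I : compact_biideal leA joinA zeroA leB joinB zeroB I ->
  exists P : list (A * B), (forall p, In p P -> I p) /\
    (forall p, I p -> forall J, bi J -> (forall q, In q P -> J q) -> J p).
Proof.
rewrite /compact_biideal => -[HI Hc].
pose S := fun J => exists p, I p /\ J = bg (fun q => q = p).
have H1 : forall J, S J -> bi J by move=> J [p [_ ->]]; exact: bigen_bi.
have H2 : forall p, I p -> bg (fun q => exists J, S J /\ J q) p.
  move=> p Ip; apply: bigen_sub; exists (bg (fun q => q = p)); split.
    by exists p.
  exact: bigen_sub.
have [s [Hs1 Hs2]] := Hc S H1 H2.
have [P [HP HPs]] : exists P : list (A * B), (forall p, In p P -> I p) /\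
    (forall J, In J s -> forall q, J q -> forall J', bi J' -> (forall p, In p P -> J' p) -> J' q).
  elim: s Hs1 {Hs2} => [|J s IH] Hs1; first by exists nil.
  have [P [HP HPs]] := IH (fun J' h => Hs1 J' (or_intror h)).
  have [p [Ip EJ]] := Hs1 J (or_introl erefl).
  exists (p :: P); split.
  - by move=> p' [<-|hp]; [exact: Ip | exact: HP].
  - move=> J0 [<-|hJ] q Jq J' HJ' HPJ'.
    + rewrite EJ in Jq; apply: Jq => // q' ->; apply: HPJ'; by left.
    + apply: (HPs J0 hJ q Jq J' HJ') => p' hp'; apply: HPJ'; by right.
exists P; split => // p Ip J HJ HPJ.
apply: (Hs2 p Ip J HJ) => q [J0 [hJ0 Jq]]; exact: HPs J0 hJ0 q Jq J HJ HPJ.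
Qed.
End Bigen.

Theorem theorem5p13 :
  [/\ infinite_type K,
      generated_by_three Kmeet Kjoin,
      hmodular Kmeet Kjoin 2 &
      forall h : nat, 0 < h ->
        forall (d : Order.disp_t) (L : bLatticeType d),
          hmodular (@Order.meet d L) (@Order.join d L) h ->
          capped_tensor Kle Kjoin K0
            (fun x y : L => is_true (x <= y)%O) (@Order.join d L) (\bot)%O].
Proof.
split.
- exact: K_infinite.
- exact: K_gen3.
- exact: K_2modular.
- move=> h _ d L Hh I HcI.
  have [P [HP HIP]] := compact_points HcI.
  exact: (I_capped HcI.1 HP Hh HIP).
Qed.
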